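(* Let $\alpha\in(0,1)$. If a deterministic algorithm for SSP is $(1+\alpha)$-consistent, then its robustness (on instances with $m$ machines) is at least $1+\frac{1-\alpha}{2\alpha}-O(\frac1m)$, where the $O(\cdot)$ hides a factor depending only on $\alpha$; this holds even when all jobs have equal processing times. In the special case of infinitesimal jobs, the robustness of a deterministic $(1+\alpha)$-consistent algorithm is at least $1+\frac{(1-\alpha)^2}{4\alpha}-O(\frac1m)$.
   Context: Scheduling with Speed Predictions (SSP). An instance consists of $n$ jobs with processing times $p_1,\dots,p_n\ge 0$ and $m$ machines with true speeds $s_1,\dots,s_m>0$; processing job $j$ on machine $i$ takes time $p_j/s_i$. For a bag (set of jobs) $B$, $p(B)=\sum_{j\in B}p_j$. In the partitioning stage the algorithm receives $\mathbf p$ and predicted speeds $\hat{\mathbf s}\ge 0$ (not $\mathbf s$) and partitions the jobs into $m$ possibly empty bags. In the scheduling stage $\mathbf s$ is revealed and each bag is assigned whole to a machine; the makespan is the maximum over machines $i$ of (total processing time assigned to $i$)$/s_i$. $opt(\mathbf p,\mathbf s)$ is the minimum makespan of assigning individual jobs knowing $\mathbf s$; $alg(\mathbf p,\hat{\mathbf s},\mathbf s)$ is the algorithm's makespan. An algorithm is $c$-consistent if $alg(\mathbf p,\mathbf s,\mathbf s)\le c\cdot opt(\mathbf p,\mathbf s)$ for all $\mathbf p,\mathbf s$; its robustness is $\sup_{\mathbf p,\hat{\mathbf s},\mathbf s} alg(\mathbf p,\hat{\mathbf s},\mathbf s)/opt(\mathbf p,\mathbf s)$. In the infinitesimal-jobs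 case, jobs are infinitesimally small, so the total load can be divided in the partitioning stage into $m$ bags of arbitrary (real, nonnegative) total processing times summing to the total load. *)

(* Defs.v *)
From HB Require Import structures.
From mathcomp Require Import all_boot all_order all_algebra.
Set Implicit Arguments. Unset Strict Implicit. Unset Printing Implicit Defensive.
Import Order.TTheory GRing.Theory Num.Theory.
Local Open Scope ring_scope.

Section SSP.
Variable R : realFieldType.

(* Jobs are 'I_n, machines are 'I_m.  Processing times p : 'I_n -> R,
   speeds s : 'I_m -> R.  An assignment of jobs to machines f : 'I_n -> 'I_m. *)

Definition load (n m : nat) (p : 'I_n -> R) (f : 'I_n -> 'I_m) (i : 'I_m) : R :=
  \sum_(j < n | f j == i) p j.

Definition makespan (n m : nat) (p : 'I_n -> R) (s : 'I_m -> R)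
    (f : 'I_n -> 'I_m) : R :=
  \big[Num.max/0]_(i < m) (load p f i / s i).

(* opt(p,s): minimum makespan over all assignments of individual jobs.
   (The minimum over the finite, nonempty when m > 0, list of all assignments.) *)
Definition opt (n m : nat) (p : 'I_n -> R) (s : 'I_m -> R) : R :=
  let l := [seq makespan p s (fun j => f j) | f : {ffun 'I_n -> 'I_m} <- enum {ffun 'I_n -> 'I_m}] in
  \big[Num.min/head 0 l]_(x <- l) x.

(* A deterministic algorithm for SSP on m machines (for any number n of jobs):
   - partitioning stage: from p and predicted speeds sh, put each job j into
     bag (part p sh j) : 'I_m (m possibly empty bags);
   - scheduling stage: from p, sh and the revealed true speeds s, assign each
     bag (whole) to a machine (sched p sh s b). *)
Record algo (m : nat) := Algo {
  part  : forall n, ('I_n -> R) -> ('I_m -> R) -> 'I_n -> 'I_m ;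
  sched : forall n, ('I_n -> R) -> ('I_m -> R) -> ('I_m -> R) -> 'I_m -> 'I_m
}.

Definition alg (m : nat) (A : algo m) (n : nat) (p : 'I_n -> R)
    (sh s : 'I_m -> R) : R :=
  makespan p s (fun j => sched A p sh s (part A p sh j)).

Definition consistent (m : nat) (A : algo m) (c : R) : Prop :=
  forall n (p : 'I_n -> R) (s : 'I_m -> R),
    (forall j, 0 <= p j) -> (forall i, 0 < s i) ->
    alg A p s s <= c * opt p s.

Definition robust_bound_equal_jobs (m : nat) (A : algo m) (r : R) : Prop :=
  forall n (c : R) (sh s : 'I_m -> R),
    0 <= c -> (forall i, 0 <= sh i) -> (forall i, 0 < s i) ->
    alg A (fun _ : 'I_n => c) sh s <= r * opt (fun _ : 'I_n => c) s.

(* The total load L is split into m bags of real sizes (ipart L sh i), and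
   the bags are then assigned to machines (isched L sh s b). *)
Record ialgo (m : nat) := IAlgo {
  ipart  : R -> ('I_m -> R) -> 'I_m -> R ;
  isched : R -> ('I_m -> R) -> ('I_m -> R) -> 'I_m -> 'I_m
}.

Definition ivalid (m : nat) (A : ialgo m) : Prop :=
  forall (L : R) (sh : 'I_m -> R), 0 <= L -> (forall i, 0 <= sh i) ->
    (forall b, 0 <= ipart A L sh b) /\ \sum_(b < m) ipart A L sh b = L.

Definition ialg (m : nat) (A : ialgo m) (L : R) (sh s : 'I_m -> R) : R :=
  \big[Num.max/0]_(i < m)
     ((\sum_(b < m | isched A L sh s b == i) ipart A L sh b) / s i).

Definition iopt (m : nat) (L : R) (s : 'I_m -> R) : R := L / \sum_(i < m) s i.

Definition iconsistent (m : nat) (A : ialgo m) (c : R) : Prop :=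
  forall (L : R) (s : 'I_m -> R), 0 <= L -> (forall i, 0 < s i) ->
    ialg A L s s <= c * iopt L s.

Definition irobust_bound (m : nat) (A : ialgo m) (r : R) : Prop :=
  forall (L : R) (sh s : 'I_m -> R),
    0 <= L -> (forall i, 0 <= sh i) -> (forall i, 0 < s i) ->
    ialg A L sh s <= r * iopt L s.

End SSP.

(* Main.v *)
Require Import Defs.
From HB Require Import structures.
From mathcomp Require Import all_boot all_order all_algebra.
From mathcomp Require Import reals ring lra zify.
Import Order.TTheory GRing.Theory Num.Theory.
Local Open Scope ring_scope.

Section All.
Variable R : realFieldType.
Lemma bigmax_ge (I : finType) (F : I -> R) i : F i <= \big[Num.max/0]_(j : I) F j.
Proof.
move: (mem_index_enum i); rewrite unlock /=.
elim: (index_enum I) => //= a s IH; rewrite inE => /orP [/eqP->|/IH H].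
  by rewrite le_max lexx.
by rewrite le_max H orbT.
Qed.

Lemma bigmax_le (I : finType) (F : I -> R) X :
  (forall i, F i <= X) -> 0 <= X -> \big[Num.max/0]_(j : I) F j <= X.
Proof.
move=> HF H0; elim/big_ind: _ => // x y Hx Hy; by rewrite ge_max Hx Hy.
Qed.

Lemma bigmax_ge0 (I : finType) (F : I -> R) : 0 <= \big[Num.max/0]_(j : I) F j.
Proof. elim/big_rec: _ => // i x _ Hx; by rewrite le_max Hx orbT. Qed.

Lemma bigmin_le (s : seq R) x x0 : x \in s -> \big[Num.min/x0]_(y <- s) y <= x.
Proof.
elim: s => //= a s IH; rewrite inE big_cons => /orP [/eqP->|/IH H].
  by rewrite ge_min lexx.
by rewrite ge_min H orbT.
Qed.

Lemma bigmin_ge0 (s : seq R) x0 : 0 <= x0 -> (forall x, x \in s -> 0 <= x) ->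
  0 <= \big[Num.min/x0]_(y <- s) y.
Proof.
move=> H0 Hs; rewrite big_seq; elim/big_ind: _ => //.
  by move=> x y Hx Hy; rewrite le_min Hx Hy.
Qed.

Lemma makespan_ge0 n m (p : 'I_n -> R) (s : 'I_m -> R) f : 0 <= makespan p s f.
Proof. exact: bigmax_ge0. Qed.

Lemma opt_le n m (p : 'I_n -> R) (s : 'I_m -> R) (f : {ffun 'I_n -> 'I_m}) :
  opt p s <= makespan p s f.
Proof.
rewrite /opt; apply: bigmin_le; apply/mapP; exists f => //; by rewrite mem_enum.
Qed.

Lemma opt_ge0 n m (p : 'I_n -> R) (s : 'I_m -> R) : 0 <= opt p s.
Proof.
rewrite /opt; apply: bigmin_ge0.
  case: (enum _) => //= *; exact: makespan_ge0.
by move=> x /mapP [f _ ->]; exact: makespan_ge0.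
Qed.

Lemma core m (be : 'I_m -> R) (T : 'I_m -> 'I_m) i0 (u w M : R) :
  (forall b, 0 <= be b) -> (forall b, be b <= M) ->
  (forall i, i != i0 -> \sum_(b | T b == i) be b <= u) ->
  \sum_(b | T b == i0) be b <= w -> 0 <= u ->
  \sum_b be b <= w + #|[pred b | T b != i0]|%:R * u /\
  \sum_b be b <= #|[pred b | T b == i0]|%:R * M + #|[pred b | T b != i0]|%:R * u.
Proof.
move=> H0 HM Hs Hf Hu.
have Hsp : \sum_b be b = \sum_(b | T b == i0) be b + \sum_(b | T b != i0) be b.
  exact: bigID.
have slow : \sum_(b | T b != i0) be b <= #|[pred b | T b != i0]|%:R * u.
  rewrite (partition_big T (fun i => i \in [set T b | b in [pred b | T b != i0]])) /=; last first.
    by move=> b Hb; apply: imset_f.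
  apply: (@le_trans _ _ (\sum_(i in [set T b | b in [pred b | T b != i0]]) u)).
    apply: ler_sum => i /imsetP [b Hb ->].
    rewrite (eq_bigl (fun b' => T b' == T b)); first by apply: Hs.
    by move=> b' /=; case: (T b' =P T b) => [->|_]; rewrite ?andbT ?andbF //; move: Hb; rewrite inE.
  rewrite sumr_const -[X in X <= _]mulr_natl; apply: (ler_wpM2r Hu); rewrite ler_nat.
  exact: leq_imset_card.
have fast : \sum_(b | T b == i0) be b <= #|[pred b | T b == i0]|%:R * M.
  apply: (@le_trans _ _ (\sum_(b in [pred b | T b == i0]) M)).
    by apply: ler_sum.
  by rewrite sumr_const -[X in X <= _]mulr_natl.
rewrite Hsp; split; apply: lerD => //.
Qed.

Lemma card_split m (T : 'I_m -> 'I_m) i0 :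
  (#|[pred b | T b == i0]|%:R + #|[pred b | T b != i0]|%:R = m%:R :> R).
Proof. by rewrite -natrD cardC card_ord. Qed.

Lemma bag_le_load m (be : 'I_m -> R) (T : 'I_m -> 'I_m) b :
  (forall b, 0 <= be b) -> be b <= \sum_(b' | T b' == T b) be b'.
Proof.
move=> H0; rewrite (bigD1 b) //= lerDl; apply: sumr_ge0 => *; exact: H0.
Qed.
Lemma alg_inf (a x J K M r : R) : 0 < a < 1 -> 2 < x * (1 - a) -> 0 <= J -> 0 <= K -> J + K = x ->
  2 * (x - 1) <= (1 + a) * (x - 1) + K * (1 + a) ->
  2 * (x - 1) <= 2 * (x - 1) * J * M + K * (1 + a) ->
  x * M <= r ->
  (1 + a) ^+ 2 / (4 * a) - 1 / (a ^+ 2 * x) <= r.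
Proof.
move=> /andP [a0 a1] hx J0 K0 hJK H1 H2 hr.
have x1 : 2 < x by nra.
have HE : (1 + a) * J <= 2 * a * x + 1 - a by nra.
set Q := 2 * (x - 1) * M - (1 + a).
have HP : x * (1 - a) - 2 <= J * Q by rewrite /Q; nra.
have Q0 : 0 < Q by nra.
have H3 : (x * (1 - a) - 2) * (1 + a) <= (2 * a * x + 1 - a) * Q.
  apply: (le_trans (y := (1 + a) * J * Q)); first by nra.
  by apply: ler_wpM2r; [exact: ltW|].
set E := 2 * a * x + 1 - a.
have E0 : 0 < E by rewrite /E; nra.
have HM : (1 + a) ^+ 2 <= 2 * E * M.
  have : (1 + a) ^+ 2 * (x - 1) <= 2 * E * M * (x - 1) by rewrite /Q /E in H3 *; nra.
  move=> h; rewrite -(ler_pM2r (_ : 0 < x - 1)) //; lra.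
have HM2 : x * (1 + a) ^+ 2 / (2 * E) <= r.
  rewrite ler_pdivrMr; last by nra.
  apply: (le_trans (y := x * (2 * E * M))); first by apply: ler_wpM2l; lra.
  have : x * M * (2 * E) <= r * (2 * E) by apply: ler_wpM2r; lra.
  lra.
apply: le_trans HM2.
have Hd : (1 + a) ^+ 2 / (4 * a) - x * (1 + a) ^+ 2 / (2 * E) = (1 + a) ^+ 2 * (1 - a) / (4 * a * E).
  rewrite /E; field; apply/andP; split; apply/lt0r_neq0 => //; exact: E0.
suff : (1 + a) ^+ 2 * (1 - a) / (4 * a * E) <= 1 / (a ^+ 2 * x) by move=> h; lra.
rewrite ler_pdivrMr; last by nra.
have h8 : 8 <= 1 / (a ^+ 2 * x) * (4 * a * E).
  rewrite mul1r mulrC ler_pdivlMr; last by nra.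
  rewrite /E; nra.
apply: le_trans h8; nra.
Qed.

Lemma alg_disc (a x J K M r : R) : 0 < a < 1 -> 3 <= x -> 0 <= J -> 0 <= K -> J + K = x ->
  2 * (x - 1) <= (1 + a) * (x - 1) + K ->
  2 * (x - 1) <= J * M + K ->
  M <= 2 * r ->
  (1 + a) / (2 * a) - 2 / (a ^+ 2 * x) <= r.
Proof.
move=> /andP [a0 a1] hx J0 K0 hJK H1 H2 hr.
set E := a * (x - 1) + 1.
have HE : J <= E by rewrite /E; nra.
have E0 : 0 < E by rewrite /E; nra.
have HP : x - 2 <= J * (M - 1) by nra.
have M1 : 0 < M - 1 by nra.
have H3 : x - 2 <= E * (M - 1).
  apply: le_trans HP _; apply: ler_wpM2r => //; exact: ltW.
have HM2 : (1 + a) * (x - 1) / (2 * E) <= r.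
  rewrite ler_pdivrMr; last by nra.
  rewrite /E in H3 *; nra.
apply: le_trans HM2.
have Hd : (1 + a) / (2 * a) - (1 + a) * (x - 1) / (2 * E) = (1 + a) / (2 * a * E).
  rewrite /E; field; apply/andP; split; apply/lt0r_neq0 => //; exact: E0.
suff : (1 + a) / (2 * a * E) <= 2 / (a ^+ 2 * x) by move=> h; lra.
rewrite ler_pdivrMr; last by nra.
have h8 : 4 <= 2 / (a ^+ 2 * x) * (2 * a * E).
  rewrite mulrAC ler_pdivlMr; last by nra.
  rewrite /E; nra.
apply: le_trans h8; nra.
Qed.

Lemma sum_one m : \sum_(i < m) (1:R) = m%:R.
Proof. by rewrite sumr_const card_ord. Qed.

Lemma small_alg (a x T : R) : 0 < a < 1 -> 0 < x -> x * (1 - a) <= 2 -> 0 <= T ->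
  T - (2 * T / (1 - a) + 1 / a ^+ 2) / x <= 0.
Proof.
move=> /andP [a0 a1] x0 hx T0.
rewrite subr_le0 ler_pdivlMr //.
have h1 : 0 <= 1 / a ^+ 2 by rewrite divr_ge0 // exprn_ge0 // ltW.
suff : T * x <= 2 * T / (1 - a) by lra.
rewrite ler_pdivlMr; last by lra.
nra.
Qed.

Lemma final_alg (a x T C L : R) : 0 < a < 1 -> 0 < x -> 0 <= T ->
  C = 2 * T / (1 - a) + 1 / a ^+ 2 -> L - 1 / (a ^+ 2 * x) <= T - C / x -> L - 1 / (a ^+ 2 * x) <= T - C / x.
Proof. by []. Qed.

Lemma Cx_ge (a x T : R) : 0 < a < 1 -> 0 < x -> 0 <= T ->
  1 / (a ^+ 2 * x) <= (2 * T / (1 - a) + 1 / a ^+ 2) / x.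
Proof.
move=> /andP [a0 a1] x0 T0.
have -> : (2 * T / (1 - a) + 1 / a ^+ 2) / x = 2 * T / (1 - a) / x + 1 / (a ^+ 2 * x).
  field; rewrite ?mulf_neq0 ?expf_neq0 ?lt0r_neq0 //; lra.
rewrite lerDr; apply: divr_ge0; last exact: ltW.
apply: divr_ge0; [lra|lra].
Qed.

Lemma part2 (a : R) m (A : ialgo R m) r : 0 < a < 1 -> (0 < m)%N -> ivalid A ->
  iconsistent A (1 + a) -> irobust_bound A r ->
  1 + (1 - a) ^+ 2 / (4 * a) - (2 * (1 + (1 - a) ^+ 2 / (4 * a)) / (1 - a) + 1 / a ^+ 2) / m%:R <= r.
Proof.
move=> ha hm HV HC HR.
have /andP [a0 a1] := ha.
set x := m%:R.
have x0 : 0 < x by rewrite /x ltr0n.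
set T := 1 + (1 - a) ^+ 2 / (4 * a).
have T0 : 0 <= T.
  rewrite /T; apply: addr_ge0 => //; apply: divr_ge0; [exact: sqr_ge0|lra].
set one := fun _ : 'I_m => (1:R).
have rob : forall sh, (forall i, 0 <= sh i) -> forall b, ipart A 1 sh b <= r / x.
  move=> sh hsh b.
  have := HR 1 sh one ler01 hsh (fun _ => ltr01).
  rewrite /iopt /one sum_one mul1r; apply: le_trans.
  rewrite /ialg; apply: (le_trans _ (bigmax_ge _ (fun i => (\sum_(b' < m | isched A 1 sh one b' == i) ipart A 1 sh b') / one i) (isched A 1 sh one b))).
  rewrite divr1; apply: bag_le_load => b'.
  exact: (proj1 (HV 1 sh ler01 hsh)).
have r1 : 1 <= r.
  have [_ Hs] := HV 1 one ler01 (fun _ => ler01).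
  rewrite -Hs; apply: (le_trans (y := \sum_(b < m) (r / x))).
    by apply: ler_sum => b _; apply: rob => i; exact: ler01.
  rewrite sumr_const card_ord -mulr_natl -/x mulrC divfK //; exact: lt0r_neq0.
case: (lerP (x * (1 - a)) 2) => hsmall.
  have := small_alg _ _ _ ha x0 hsmall T0; lra.
have x2 : 2 < x by nra.
pose i0 : 'I_m := Ordinal hm.
pose sh := fun i : 'I_m => if i == i0 then x - 1 else 1.
have hshp : forall i, 0 < sh i by move=> i; rewrite /sh; case: ifP => _; lra.
have hsh : forall i, 0 <= sh i by move=> i; exact: ltW.
have Ssh : \sum_(i < m) sh i = 2 * (x - 1).
  rewrite (bigD1 i0) //= {1}/sh eqxx.
  rewrite (eq_bigr (fun _ => 1)); last by move=> i /negbTE hi; rewrite /sh hi.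
  rewrite sumr_const.
  have := @card_split m (fun b : 'I_m => b) i0; rewrite /= card1 -/x => h.
  lra.
have HCc := HC 1 sh ler01 hshp.
rewrite /iopt Ssh mul1r in HCc.
set u := (1 + a) * (2 * (x - 1))^-1 in HCc.
have u0 : 0 <= u by rewrite /u; apply: mulr_ge0; [lra| rewrite invr_ge0; lra].
have Hu : u * (2 * (x - 1)) = 1 + a by rewrite /u -mulrA mulVf ?mulr1 //; lra.
set Tm := isched A 1 sh sh.
set be := ipart A 1 sh.
have [be0 Sbe] := HV 1 sh ler01 hsh.
have mach : forall i, (\sum_(b | Tm b == i) be b) / sh i <= u.
  move=> i; apply: (le_trans _ HCc); exact: (bigmax_ge _ (fun i => (\sum_(b | Tm b == i) be b) / sh i) i).
have Hslow : forall i, i != i0 -> \sum_(b | Tm b == i) be b <= u.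
  by move=> i hi; have := mach i; rewrite /sh (negbTE hi) divr1.
have Hfast : \sum_(b | Tm b == i0) be b <= (x - 1) * u.
  have := mach i0; rewrite /sh eqxx ler_pdivrMr; last lra.
  by rewrite mulrC.
have [H1 H2] := @core m be Tm i0 u ((x - 1) * u) (r / x) be0 (rob sh hsh) Hslow Hfast u0.
have HJK := @card_split m Tm i0.
set J := #|[pred b | Tm b == i0]|%:R in H1 H2 HJK.
set K := #|[pred b | Tm b != i0]|%:R in H1 H2 HJK.
rewrite Sbe in H1 H2.
have J0 : 0 <= J by rewrite /J ler0n.
have K0 : 0 <= K by rewrite /K ler0n.
have h2x : 0 <= 2 * (x - 1) by lra.
have e : forall y, y * u * (2 * (x - 1)) = y * (1 + a) by move=> y; rewrite -mulrA Hu.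
have H1' : 2 * (x - 1) <= (1 + a) * (x - 1) + K * (1 + a).
  have := ler_wpM2r h2x H1; rewrite mul1r.
  suff -> : ((x - 1) * u + K * u) * (2 * (x - 1)) = (1 + a) * (x - 1) + K * (1 + a) by [].
  by rewrite mulrDl !e; ring.
have H2' : 2 * (x - 1) <= 2 * (x - 1) * J * (r / x) + K * (1 + a).
  have := ler_wpM2r h2x H2; rewrite mul1r.
  suff -> : (J * (r / x) + K * u) * (2 * (x - 1)) = 2 * (x - 1) * J * (r / x) + K * (1 + a) by [].
  by rewrite mulrDl e; congr (_ + _); ring.
have hxr : x * (r / x) <= r by rewrite mulrC divfK ?lt0r_neq0.
have := alg_inf _ _ _ _ _ _ ha hsmall J0 K0 HJK H1' H2' hxr.
have hC := Cx_ge _ _ _ ha x0 T0.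
have hT : T = (1 + a) ^+ 2 / (4 * a) by rewrite /T; field; lra.
lra.
Qed.


Lemma load_ge n m (p : 'I_n -> R) (f : 'I_n -> 'I_m) j :
  (forall j, 0 <= p j) -> p j <= load p f (f j).
Proof.
move=> H0; rewrite /load (bigD1 j) //= lerDl; apply: sumr_ge0 => *; exact: H0.
Qed.

Lemma load_part n m (p : 'I_n -> R) (P : 'I_n -> 'I_m) (Tm : 'I_m -> 'I_m) i :
  load p (fun j => Tm (P j)) i = \sum_(b | Tm b == i) \sum_(j | P j == b) p j.
Proof.
rewrite /load (partition_big P (fun b => Tm b == i)) //=.
apply: eq_bigr => b /eqP hb; apply: eq_bigl => j; rewrite -hb.
by case: (P j =P b) => [->|]; rewrite ?eqxx ?andbF.
Qed.

Lemma sum_part n m (p : 'I_n -> R) (P : 'I_n -> 'I_m) :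
  \sum_b \sum_(j | P j == b) p j = \sum_j p j.
Proof. by rewrite (partition_big P (fun _ => true)). Qed.

Lemma makespan_ffun n m (p : 'I_n -> R) (s : 'I_m -> R) (g : 'I_n -> 'I_m) :
  makespan p s (fun j => [ffun j0 => g j0] j) = makespan p s g.
Proof.
rewrite /makespan /load; apply: eq_bigr => i _; congr (_ / _).
by apply: eq_bigl => j; rewrite ffunE.
Qed.

Lemma opt_le' n m (p : 'I_n -> R) (s : 'I_m -> R) (g : 'I_n -> 'I_m) :
  opt p s <= makespan p s g.
Proof. by rewrite -makespan_ffun; apply: opt_le. Qed.

Lemma fiber_card n (T' : finType) (B : {pred 'I_n}) (g : 'I_n -> T') :
  {in B &, injective g} -> (#|B| <= #|T'|)%N.
Proof. by move=> H; rewrite -(card_in_imset H); apply: max_card. Qed.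

Lemma load_ones n m (f : 'I_n -> 'I_m) i :
  load (fun _ => (1:R)) f i = #|[pred j | f j == i]|%:R.
Proof. by rewrite /load sumr_const. Qed.

Lemma small_alg1 (a x T : R) : 0 < a < 1 -> 0 < x -> x <= 2 -> 0 <= T ->
  T - (2 * T + 2 / a ^+ 2) / x <= 0.
Proof.
move=> /andP [a0 a1] x0 hx T0.
rewrite subr_le0 ler_pdivlMr //.
have h1 : 0 <= 2 / a ^+ 2 by rewrite divr_ge0 // exprn_ge0 // ltW.
nra.
Qed.

Lemma Cx_ge1 (a x T : R) : 0 < a < 1 -> 0 < x -> 0 <= T ->
  2 / (a ^+ 2 * x) <= (2 * T + 2 / a ^+ 2) / x.
Proof.
move=> /andP [a0 a1] x0 T0.
have -> : (2 * T + 2 / a ^+ 2) / x = 2 * T / x + 2 / (a ^+ 2 * x).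
  field; rewrite ?mulf_neq0 ?expf_neq0 ?lt0r_neq0 //; lra.
rewrite lerDr; apply: divr_ge0; last exact: ltW.
lra.
Qed.

Lemma part1 (a : R) m (A : algo R m) r : 0 < a < 1 -> (0 < m)%N ->
  consistent A (1 + a) -> robust_bound_equal_jobs A r ->
  1 + (1 - a) / (2 * a) - (2 * (1 + (1 - a) / (2 * a)) + 2 / a ^+ 2) / m%:R <= r.
Proof.
move=> ha hm HC HR.
have /andP [a0 a1] := ha.
set T := 1 + (1 - a) / (2 * a).
have T0 : 0 <= T by rewrite /T; apply: addr_ge0 => //; apply: divr_ge0; lra.
have x0 : 0 < m%:R :> R by rewrite ltr0n.
set one := fun _ : 'I_m => (1:R).
have r0 : 0 < r.
  have := HR 1%N 1 one one ler01 (fun _ => ler01) (fun _ => ltr01).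
  set o := opt _ _.
  have o0 : 0 <= o by apply: opt_ge0.
  have h1 : 1 <= alg A (fun _ : 'I_1 => (1:R)) one one.
    rewrite /alg /makespan.
    set f := fun j => sched A _ one one (part A _ one j).
    apply: (le_trans _ (bigmax_ge _ (fun i => load (fun _ : 'I_1 => (1:R)) f i / one i) (f ord0))).
    rewrite /one divr1; exact: (@load_ge 1 _ (fun _ => 1) f ord0 (fun _ => ler01)).
  move=> h; nra.
case: (leqP m 2) => hm2.
  have hx : m%:R <= 2 :> R by rewrite (ler_nat R m 2).
  have := small_alg1 _ _ _ ha x0 hx T0; lra.
clear one; case: m A HC HR hm hm2 x0 => [|[|[|k]]] // A HC HR _ _ x0.
pose one := fun _ : 'I_k.+3 => (1:R).
set x := k.+3%:R : R.
set y := k.+2%:R : R.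
have hxy : x = y + 1 by rewrite /x /y natr1.
have y2 : 2 <= y by rewrite /y (ler_nat R 2 k.+2).
set n := (k.+2 + k.+2)%N.
pose p := fun _ : 'I_n => (1:R).
have p0 : forall j, 0 <= p j by move=> j; exact: ler01.
pose sh := fun i : 'I_k.+3 => if i == ord0 then y else 1.
have hshp : forall i, 0 < sh i by move=> i; rewrite /sh; case: ifP => _; lra.
have hsh : forall i, 0 <= sh i by move=> i; exact: ltW.
pose f0 := fun j : 'I_n => if (j < k.+2)%N then (ord0 : 'I_k.+3) else inord (j - k.+1).
have jn : forall j : 'I_n, (j < k.+2 + k.+2)%N by move=> j; exact: ltn_ord.
have f0z : forall j, f0 j == ord0 -> (j < k.+2)%N.
  move=> j; rewrite /f0; case: ifP => // hj /eqP e.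
  have := congr1 val e; rewrite /= inordK; have := jn j; lia.
have opt0 : opt p sh <= 1.
  apply: (le_trans (@opt_le' _ _ p sh f0)); apply: bigmax_le => // i.
  rewrite load_ones /sh; case: ifP => [/eqP -> | hi].
    rewrite ler_pdivrMr; last lra.
    rewrite mul1r /y ler_nat.
    apply: (@leq_trans #|'I_k.+2|); last by rewrite card_ord.
    apply: fiber_card (fun j : 'I_n => (inord j : 'I_k.+2)) _ => j j'.
    rewrite !inE => /f0z hj /f0z hj' e; apply: val_inj.
    by have := congr1 val e; rewrite /= !inordK.
  rewrite divr1 (ler_nat R _ 1).
  suff : {in [pred j | f0 j == i] &, injective (fun _ : 'I_n => tt)}.
    by move/fiber_card; rewrite card_unit.
  move=> j j'; rewrite !inE /f0.
  have hi' : i != ord0 by rewrite hi.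
  case: ifP => hj; first by move=> /eqP e; rewrite -e eqxx in hi'.
  case: ifP => hj'; first by move=> _ /eqP e; rewrite -e eqxx in hi'.
  move=> /eqP e1 /eqP e2 _; apply: val_inj => /=.
  move: hj hj' => /negbT hj /negbT hj'; have hjn := jn j; have hjn' := jn j'.
  have := congr1 val (etrans e1 (esym e2)); rewrite /= !inordK; lia.
pose f1 := fun j : 'I_n => (inord j./2 : 'I_k.+3).
have opt1 : opt p one <= 2.
  apply: (le_trans (@opt_le' _ _ p one f1)); apply: bigmax_le => // i.
  rewrite load_ones /one divr1 (ler_nat R _ 2).
  suff : {in [pred j | f1 j == i] &, injective (fun j : 'I_n => odd j)}.
    by move/fiber_card; rewrite card_bool.
  move=> j j'; rewrite !inE /f1 => /eqP e1 /eqP e2 ho.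
  have hjn := jn j; have hjn' := jn j'.
  have := congr1 val (etrans e1 (esym e2)); rewrite /= !inordK; try lia.
  move=> e; apply: val_inj.
  have h1 := odd_double_half j; have h2 := odd_double_half j'; rewrite ho e in h1; by rewrite /= -h1 h2.
have HCc := HC n p sh p0 hshp.
have alg1 : alg A p sh sh <= 1 + a.
  apply: (le_trans HCc); rewrite -[X in _ <= X]mulr1; apply: ler_wpM2l => //; lra.
set P := part A p sh.
set Tm := sched A p sh sh.
pose be := fun b => \sum_(j | P j == b) p j.
have be0 : forall b, 0 <= be b by move=> b; apply: sumr_ge0 => j _; exact: p0.
have mach : forall i, load p (fun j => Tm (P j)) i / sh i <= 1 + a.
  move=> i; apply: (le_trans _ alg1).
  exact: (bigmax_ge _ (fun i => load p (fun j => Tm (P j)) i / sh i) i).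
have Hslow : forall i, i != ord0 -> \sum_(b | Tm b == i) be b <= 1.
  move=> i hi; rewrite /be -load_part.
  have := mach i; rewrite /sh (negbTE hi) divr1 /p load_ones.
  move=> h; have h2 : (#|[pred j | Tm (P j) == i]|%:R < 2%:R :> R) by lra.
  rewrite ltr_nat in h2; rewrite (ler_nat R _ 1); lia.
have Hfast : \sum_(b | Tm b == ord0) be b <= (1 + a) * y.
  rewrite /be -load_part.
  have := mach ord0; rewrite /sh eqxx ler_pdivrMr; last lra.
  by [].
have Sbe : \sum_b be b = 2 * y.
  rewrite /be sum_part /p sum_one /n natrD /y; ring.
set T' := sched A p sh one.
set M := alg A p sh one.
have beM : forall b, be b <= M.
  move=> b; apply: (le_trans (@bag_le_load _ be T' b be0)).
  rewrite /be -load_part.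
  have -> : load p (fun j => T' (P j)) (T' b) = load p (fun j => T' (P j)) (T' b) / one (T' b).
    by rewrite /one divr1.
  exact: (bigmax_ge _ (fun i => load p (fun j => T' (P j)) i / one i) (T' b)).
have M2 : M <= 2 * r.
  have := HR n 1 sh one ler01 hsh (fun _ => ltr01).
  rewrite -/M => h; apply: (le_trans h); rewrite mulrC; apply: ler_wpM2r => //; exact: ltW.
have [H1 H2] := @core k.+3 be Tm ord0 1 ((1 + a) * y) M be0 beM Hslow Hfast ler01.
have HJK := @card_split k.+3 Tm ord0.
set J := #|[pred b | Tm b == ord0]|%:R in H1 H2 HJK.
set K := #|[pred b | Tm b != ord0]|%:R in H1 H2 HJK.
rewrite Sbe in H1 H2.
have J0 : 0 <= J by rewrite /J ler0n.
have K0 : 0 <= K by rewrite /K ler0n.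
have x3 : 3 <= x by lra.
have H1' : 2 * (x - 1) <= (1 + a) * (x - 1) + K by rewrite hxy; lra.
have H2' : 2 * (x - 1) <= J * M + K by rewrite hxy; lra.
have := alg_disc _ _ _ _ _ _ ha x3 J0 K0 HJK H1' H2' M2.
have x0' : 0 < x by lra.
have hC := Cx_ge1 _ _ _ ha x0' T0.
have hT : T = (1 + a) / (2 * a) by rewrite /T; field; lra.
move=> h. clearbody T x y.
lra.
Qed.

End All.

Theorem theorem1 (R : realType) (alpha : R) :
  0 < alpha < 1 ->
  (exists C : R, forall (m : nat) (A : algo R m), (0 < m)%N ->
     consistent A (1 + alpha) ->
     forall r : R, robust_bound_equal_jobs A r ->
       1 + (1 - alpha) / (2 * alpha) - C / m%:R <= r)
  /\
  (exists C : R, forall (m : nat) (A : ialgo R m), (0 < m)%N ->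
     ivalid A -> iconsistent A (1 + alpha) ->
     forall r : R, irobust_bound A r ->
       1 + (1 - alpha) ^+ 2 / (4 * alpha) - C / m%:R <= r).
Proof.
move=> ha; split.
  exists (2 * (1 + (1 - alpha) / (2 * alpha)) + 2 / alpha ^+ 2).
  move=> m A hm HC r HR; exact: (@part1 R alpha m A r ha hm HC HR).
exists (2 * (1 + (1 - alpha) ^+ 2 / (4 * alpha)) / (1 - alpha) + 1 / alpha ^+ 2).
move=> m A hm HV HC r HR; exact: (@part2 R alpha m A r ha hm HV HC HR).
Qed.
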